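(* Define words over $\{\sigma,\tau\}$ by $W_0=\sigma$ and, for $1\le k\le n-4$, $$W_k=\tau\cdot\prod_{i=1}^{n-2}\sigma^i\,W_{\Delta(k,i)}\,\gamma_{n-2-i}.$$ Then for every $k\in\{1,\dots,n-4\}$ and every seed $\psi\notin Hub_n$ with $height(\psi)=k$, the permutation $\widetilde\psi$ precedes $\psi^{(n-1)}$ on $PATH(n)$ and the word of edge labels of the subpath of $PATH(n)$ from $\widetilde\psi$ to $\psi^{(n-1)}$ equals $W_k$.
   Context: Fix an integer $n\ge 5$. An $n$-permutation is a sequence $(a_1,\dots,a_n)$ of the distinct elements of $\{1,\dots,n\}$. For $\pi=(a_1,\dots,a_n)$ put $\sigma(\pi)=(a_2,\dots,a_n,a_1)$ and $\tau(\pi)=(a_2,a_1,a_3,\dots,a_n)$. On $\{1,\dots,n-1\}$ let $a\oplus 1=a+1$ for $a<n-1$ and $(n-1)\oplus 1=1$; $a\ominus 1$ is the unique $b$ with $b\oplus 1=a$, and $a\oplus j$, $a\ominus j$ denote $j$-fold iterates. A seed is an $(n-1)$-tuple $\psi=(a_1,\dots,a_{n-1})$ of distinct elements of $\{1,\dots,n\}$ with $a_1=n$ and $a_2\oplus1\notin\{a_1,\dots,a_{n-1}\}$; its missing element is $mis(\psi)=a_2\oplus 1$. The package $perms(\psi)$ is the set of all $n$-permutations obtained from $\psi$ by inserting $mis(\psi)$ at any position and then applying any cyclic rotation. For a seed $\psi=(a_1,\dots,a_{n-1})$ with $x=mis(\psi)$: $height(\psi)$ is the largest $k\in\{1,\dots,n-2\}$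 such that $a_i=a_{i+1}\oplus 1$ for all $2\le i\le k$; $\widetilde\psi=(a_1,x,a_2,\dots,a_{n-1})$; $\psi^{(n-1)}=(x,a_2,\dots,a_{n-1},a_1)$. $Hub_n$ is the set of the $n-1$ seeds $(n,b,b\ominus1,\dots,b\ominus(n-3))$, $b\in\{1,\dots,n-1\}$. $\Delta(k,i)=\min(k-1,n-2-i)$. Words over $\{\sigma,\tau\}$ act on permutations left to right; $\sigma^i$ is $i$ copies of $\sigma$, $\gamma_k=\sigma^k\tau$, and $\prod_{i=a}^b u_i$ is the concatenation $u_au_{a+1}\cdots u_b$. Let $\pi_0=(n,n-1,\dots,1)$. For a seed $\psi$ with $x=mis(\psi)$ let $E(\psi)$ be the set of labelled directed edges consisting of a $\tau$-edge $\pi\to\tau(\pi)$ for every $\pi\in perms(\psi)$ whose second entry is $x$, and a $\sigma$-edge $\pi\to\sigma(\pi)$ for every $\pi\in perms(\psi)$ whose second entry is not $x$. Let $P$ be the union of $E(\psi)$ over all seeds; delete from $P$ every $\sigma$-edge leaving a vertex that has an outgoing $\tau$-edge in $P$; then add the $\sigma$-edge $\pi_0\to\sigma(\pi_0)$ and delete the $\tau$-edges $\pi_0\to\tau(\pi_0)$ and $\tau(\sigma(\pi_0))\to\sigma(\pi_0)$. The resulting graph $PATH(n)$ is a Hamiltonian path on all $n!$ $n$-permutations (the Sawada–Williams $\sigma\tau$-path), starting at $\tau(\pi_0)$. *)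

(* Defs.v *)
From mathcomp Require Import all_boot.
Set Implicit Arguments. Unset Strict Implicit. Unset Printing Implicit Defensive.

(* n-permutations are represented as sequences of naturals; the entries of a
   sequence are indexed from 0 in Rocq, so the paper's a_i is nth 0 s (i-1). *)

Inductive label := Sig | Tau.

Definition sigma (s : seq nat) : seq nat := rot 1 s.
Definition tau (s : seq nat) : seq nat :=
  match s with a :: b :: t => b :: a :: t | _ => s end.
Definition act (l : label) (s : seq nat) : seq nat :=
  match l with Sig => sigma s | Tau => tau s end.
(* words act left to right *)
Definition act_word (w : seq label) (s : seq nat) : seq nat :=
  foldl (fun p l => act l p) s w.

Definition osucc (n a : nat) : nat := if a < n - 1 then a + 1 else 1.
Definition opred (n a : nat) : nat := if 1 < a then a - 1 else n - 1.

Definition isSeed (n : nat) (psi : seq nat) : Prop :=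
  [/\ size psi = n - 1, uniq psi, all (fun a => (1 <= a) && (a <= n)) psi,
      nth 0 psi 0 = n & osucc n (nth 0 psi 1) \notin psi].

Definition mis (n : nat) (psi : seq nat) : nat := osucc n (nth 0 psi 1).

Definition inPerms (n : nat) (psi pi : seq nat) : Prop :=
  exists j r, j <= size psi /\
    pi = rot r (take j psi ++ mis n psi :: drop j psi).

Definition height_ok (n : nat) (psi : seq nat) (k : nat) : bool :=
  all (fun i => nth 0 psi (i - 1) == osucc n (nth 0 psi i)) (iota 2 (k - 1)).
Definition height (n : nat) (psi : seq nat) : nat :=
  \max_(1 <= k < n - 1 | height_ok n psi k) k.

Definition psi_tilde (n : nat) (psi : seq nat) : seq nat :=
  nth 0 psi 0 :: mis n psi :: behead psi.
Definition psi_rot (n : nat) (psi : seq nat) : seq nat :=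
  mis n psi :: rcons (behead psi) (nth 0 psi 0).

Definition inHub (n : nat) (psi : seq nat) : Prop :=
  exists b, 1 <= b <= n - 1 /\
    psi = n :: [seq iter j (opred n) b | j <- iota 0 (n - 2)].

Definition Delta (n k i : nat) : nat := minn (k - 1) (n - 2 - i).

Definition gamma (k : nat) : seq label := rcons (nseq k Sig) Tau.

(* W_k, defined with fuel (Delta (n,k,i) <= k-1, so fuel k suffices) *)
Fixpoint Wf (n fuel k : nat) : seq label :=
  match fuel with
  | 0 => [:: Sig]
  | f.+1 =>
      if k is 0 then [:: Sig] else
      Tau :: flatten [seq nseq i Sig ++ Wf n f (Delta n k i) ++ gamma (n - 2 - i)
                     | i <- iota 1 (n - 2)]
  end.
Definition W (n k : nat) : seq label := Wf n k k.

Definition pi0 (n : nat) : seq nat := rev (iota 1 n).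

Definition inP_tau (n : nat) (pi : seq nat) : Prop :=
  exists psi, isSeed n psi /\ inPerms n psi pi /\ nth 0 pi 1 = mis n psi.
Definition inP_sig (n : nat) (pi : seq nat) : Prop :=
  exists psi, isSeed n psi /\ inPerms n psi pi /\ nth 0 pi 1 <> mis n psi.

(* edges of PATH(n): an edge labelled l leaves pi (and goes to act l pi) *)
Definition pathEdge (n : nat) (l : label) (pi : seq nat) : Prop :=
  match l with
  | Sig => (inP_sig n pi /\ ~ inP_tau n pi) \/ pi = pi0 n
  | Tau => inP_tau n pi /\ pi <> pi0 n /\ pi <> tau (sigma (pi0 n))
  end.

Fixpoint walk (n : nat) (pi : seq nat) (w : seq label) : Prop :=
  match w with
  | [::] => True
  | l :: w' => pathEdge n l pi /\ walk n (act l pi) w'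
  end.

(* Main.v *)
Require Import Defs.
From mathcomp Require Import all_boot zify.
Set Implicit Arguments. Unset Strict Implicit. Unset Printing Implicit Defensive.

Lemma walk_cat n p w1 w2 :
  walk n p (w1 ++ w2) <-> walk n p w1 /\ walk n (act_word w1 p) w2.
Proof.
elim: w1 p => [|l w IH] p /=; first by tauto.
rewrite IH; tauto.
Qed.

Lemma act_word_cat w1 w2 p : act_word (w1 ++ w2) p = act_word w2 (act_word w1 p).
Proof. by rewrite /act_word foldl_cat. Qed.

Lemma nth_rot (A : seq nat) r q : q + r < size A -> nth 0 (rot r A) q = nth 0 A (r + q).
Proof.
move=> h; rewrite /rot nth_cat size_drop ifT; last by lia.
by rewrite nth_drop.
Qed.

Lemma nth_rot_last (A : seq nat) r : size A = r.+1 -> 0 < r -> nth 0 (rot r A) 1 = nth 0 A 0.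
Proof.
move=> h hr; rewrite /rot nth_cat size_drop ifF; last by lia.
rewrite nth_take; last by lia.
by congr nth; lia.
Qed.

Lemma sig_run n (A : seq nat) a b : a <= b -> b <= size A ->
  (forall r, a <= r < b -> pathEdge n Sig (rot r A)) ->
  walk n (rot a A) (nseq (b - a) Sig) /\ act_word (nseq (b - a) Sig) (rot a A) = rot b A.
Proof.
move=> hab hb; move Hd: (b - a) => d; elim: d a hab Hd => [|d IH] a hab Hd H.
  by have -> : a = b by lia.
rewrite /=; split.
  split; first by apply: H; lia.
  have := IH a.+1 ltac:(lia) ltac:(lia) ltac:(move=> r hr; apply: H; lia).
  by rewrite /sigma -rotD ?add1n; [case| lia].
have := IH a.+1 ltac:(lia) ltac:(lia) ltac:(move=> r hr; apply: H; lia).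
by rewrite /sigma -rotD ?add1n; [case| lia].
Qed.

Lemma canon_rot (B : seq nat) a r : uniq B -> nth 0 B 0 = a -> 0 < size B -> r <= size B ->
  rot (index a (rot r B)) (rot r B) = B.
Proof.
move=> hu ha hs hr.
case: B hu ha hs hr => [//|b B] hu ha _ hr; subst a.
case: r hr => [|r] hr.
  by rewrite rot0 /= eqxx rot0.
rewrite /rot index_cat /= eqxx.
have -> : b \in drop r.+1 (b :: B) = false.
  apply/negP => hin; move: hu => /= /andP [hb _]; move/negP: hb; apply.
  by rewrite /= in hin; apply: (mem_drop hin).
rewrite addn0.
by rewrite drop_size_cat // take_size_cat // /= cat_take_drop.
Qed.

Lemma perm_ins (X : seq nat) t m : perm_eq (take t X ++ m :: drop t X) (m :: X).
Proof. by rewrite -cat1s perm_catCA /= cat_take_drop. Qed.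

Lemma rot_norm (B : seq nat) r : exists r', r' <= size B /\ rot r B = rot r' B.
Proof.
case: (leqP r (size B)) => h; first by exists r.
by exists 0; rewrite rot0 rot_oversize //; lia.
Qed.

Lemma perms_canon n (phi' : seq nat) m pi : uniq (m :: n :: phi') ->
  (exists j r, j <= size (n :: phi') /\ pi = rot r (take j (n :: phi') ++ m :: drop j (n :: phi'))) ->
  exists t, t <= size phi' /\ rot (index n pi) pi = n :: take t phi' ++ m :: drop t phi'.
Proof.
move=> hu [j [r [hj ->]]].
case: j hj => [|j] hj.
  exists (size phi'); split => //.
  rewrite take_size drop_size /=.
  set B := n :: phi' ++ [:: m].
  have huB : uniq B.
    by rewrite /B -cat_cons (perm_uniq (permEl (perm_catC _ _))).
  have [r'' [hr'' ->]] : exists r'', r'' <= size B /\ rot r (m :: n :: phi') = rot r'' B.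
    case: r => [|r].
      exists (size (n :: phi')); split; first by rewrite /B /= size_cat /=; lia.
      by rewrite rot0 /B -cat1s -cat_cons rot_size_cat.
    case: (leqP r.+1 (size (m :: n :: phi'))) => h.
      exists r; split; first by rewrite /B /= size_cat /=; move: h => /=; lia.
      rewrite -addn1 rotD; last by move: h => /=; lia.
      by rewrite rot1_cons /B -cats1.
    exists (size (n :: phi')); split; first by rewrite /B /= size_cat /=; lia.
    rewrite rot_oversize; last by lia.
    by rewrite /B -cat1s -cat_cons rot_size_cat.
  exact: canon_rot.
exists j; split; first by move: hj => /=; lia.
set B := n :: take j phi' ++ m :: drop j phi'.
have huB : uniq B.
  rewrite /B /= (perm_uniq (perm_ins phi' j m)) (perm_mem (perm_ins phi' j m)).
  move: hu => /=; rewrite !inE; case/andP=> /norP [h1 h2] /andP [h3 h4].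
  by rewrite negb_or eq_sym h1 h3 h2 h4.
have -> : take j.+1 (n :: phi') ++ m :: drop j.+1 (n :: phi') = B by [].
have [r' [hr' ->]] := rot_norm B r.
exact: canon_rot.
Qed.

Lemma nth_ins (s : seq nat) j x q : j <= size s ->
  nth 0 (take j s ++ x :: drop j s) q =
  if q < j then nth 0 s q else if q == j then x else nth 0 s q.-1.
Proof.
move=> hj; rewrite nth_cat size_take.
have -> : (if j < size s then j else size s) = j by case: ifP => //; lia.
case: ifP => hq; first by rewrite nth_take.
case: eqP => [->|hne]; first by rewrite subnn.
have -> : q - j = (q.-1 - j).+1 by lia.
by rewrite /= nth_drop; congr nth; lia.
Qed.

Definition Lj n (s : seq nat) j := n :: take j s ++ osucc n (nth 0 s 0) :: drop j s.

Definition good n (s : seq nat) :=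
  [/\ size s = n - 2, uniq (n :: s), all (fun a => (1 <= a) && (a <= n)) s
    & osucc n (nth 0 s 0) \notin n :: s].

Lemma osucc_range n a : 2 <= n -> 1 <= osucc n a <= n - 1.
Proof. move=> h; rewrite /osucc; case: (ltnP a (n - 1)) => h2; lia. Qed.

Lemma osucc2 n a : 4 <= n -> 1 <= a <= n - 1 -> osucc n (osucc n a) != a.
Proof.
move=> h1 h2; rewrite /osucc; case: (ltnP a (n - 1)) => h3.
  case: (ltnP (a + 1) (n - 1)) => h4; apply/eqP; lia.
case: (ltnP 1 (n - 1)) => h4; apply/eqP; lia.
Qed.

Lemma good_range n s q : good n s -> q < size s -> 1 <= nth 0 s q <= n - 1.
Proof.
case=> hs hu ha hx hq.
have hin : nth 0 s q \in s by apply: mem_nth.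
move/allP: ha => /(_ _ hin) /andP [h1 h2].
move: hu => /= /andP [hn _].
have : nth 0 s q != n by apply/eqP => e; rewrite -e hin in hn.
move/eqP; lia.
Qed.

Lemma Lj_size n s j : good n s -> 2 <= n -> j <= size s -> size (Lj n s j) = n.
Proof.
case=> hs _ _ _ hn hj; rewrite /Lj /= size_cat /= size_take size_drop.
case: (ltnP j (size s)) => h; lia.
Qed.

Lemma Lj_uniq n s j : good n s -> uniq (Lj n s j).
Proof.
case=> hs hu _ hx; rewrite /Lj /= (perm_uniq (perm_ins s j _)) (perm_mem (perm_ins s j _)).
move: hu hx => /= /andP [h1 h2]; rewrite !inE negb_or => /andP [h3 h4].
by rewrite h4 h2 negb_or eq_sym h3 h1.
Qed.

Lemma Lj_nth n s j q : j <= size s ->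
  nth 0 (Lj n s j) q.+1 = if q < j then nth 0 s q else if q == j then osucc n (nth 0 s 0) else nth 0 s q.-1.
Proof. move=> hj; by rewrite /Lj /= nth_ins. Qed.

Lemma not_tau n s j r : 5 <= n -> good n s -> 1 <= j <= n - 2 -> r < n ->
  inP_tau n (rot r (Lj n s j)) ->
  r = j \/ (r = 0 /\ 2 <= j /\ nth 0 s 0 = osucc n (nth 0 s 1)).
Proof.
move=> hn hg hj hr [psi0 [[hs0 hu0 ha0 hh0 hm0] [hp hm]]].
case: psi0 hs0 hu0 ha0 hh0 hm0 hp hm => [|b phi'] hs0 hu0 ha0 hh0 hm0 hp hm.
  by simpl in hs0; lia.
simpl in hh0; subst b.
set m := mis n (n :: phi') in hm hp.
have hmdef : m = osucc n (nth 0 phi' 0) by [].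
have hu1 : uniq (m :: n :: phi') by rewrite /= in hu0 *; rewrite hu0 andbT; exact: hm0.
have [t [ht hc]] := perms_canon hu1 hp.
have hgs := hg; case: hgs => hs _ _ _.
set C := Lj n s j in hm hc.
have hsC : size C = n by rewrite Lj_size //; lia.
have huC : uniq C by apply: Lj_uniq.
rewrite canon_rot // in hc; last by lia.
have hsphi : size phi' = n - 2 by simpl in hs0; lia.
have hCm : nth 0 C t.+1 = m by rewrite hc /= nth_ins // ltnn eqxx.
have hC1 : nth 0 C 1 = nth 0 s 0 by rewrite /C Lj_nth; [rewrite ifT; lia | lia].
have hCx : nth 0 C j.+1 = osucc n (nth 0 s 0) by rewrite /C Lj_nth ?ltnn ?eqxx //; lia.
case: (ltnP r.+1 n) => hrn.
  rewrite nth_rot in hm; last by lia.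
  have rt : r = t.
    apply/eqP; rewrite -eqSS -(nth_uniq 0 _ _ huC); try (rewrite hsC; lia).
    by rewrite addn1 in hm; rewrite hm hCm.
  subst t.
  clear hp; case: r hrn hr ht hc hCm hm => [|r] hrn hr ht hc hCm hm.
    right; split => //.
    have hC2 : nth 0 C 2 = nth 0 phi' 0 by rewrite hc take0 drop0.
    move: hC2; rewrite /C Lj_nth; last by lia.
    rewrite -hC1 hCm hmdef.
    case: (ltnP 1 j) => hj1 /=.
      by move=> ->.
    have -> : (1 == j) = true by apply/eqP; lia.
    move=> e; exfalso.
    have := osucc_range (n := n) (osucc n (nth 0 phi' 0)) ltac:(lia).
    rewrite e => hr0.
    move: (osucc2 (n := n) (a := nth 0 phi' 0) ltac:(lia) hr0).
    by rewrite e eqxx.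
  left.
  have hC1' : nth 0 C 1 = nth 0 phi' 0 by rewrite hc /= nth_ins //; rewrite ifT //; lia.
  apply/eqP; rewrite -eqSS -(nth_uniq 0 _ _ huC); try (rewrite hsC; lia).
  by rewrite hCm hCx hmdef -hC1' hC1.
exfalso.
have hr' : r = n - 1 by lia.
rewrite nth_rot_last in hm; try lia.
have := osucc_range (n := n) (nth 0 phi' 0) ltac:(lia).
by rewrite -hmdef -hm /C /Lj /=; lia.
Qed.

Lemma good_seed n s : 2 <= n -> good n s -> isSeed n (n :: s).
Proof.
move=> hn [hs hu ha hx]; split => //=; first by lia.
by rewrite leqnn ha; lia.
Qed.

Lemma seed_good n psi : 2 <= n -> isSeed n psi -> psi = n :: behead psi /\ good n (behead psi).
Proof.
move=> hn [hs hu ha hh hx].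
case: psi hs hu ha hh hx => [|b t] /= hs hu ha hh hx; first by lia.
subst b; split => //; split => //; first by lia.
by case/andP: ha.
Qed.

Lemma inPerms_Lj n s j r : j <= size s -> inPerms n (n :: s) (rot r (Lj n s j)).
Proof. by move=> hj; exists j.+1, r; split. Qed.

Lemma sig_edge n s j r : 5 <= n -> good n s -> 1 <= j <= n - 2 -> r < n -> r <> j ->
  (r = 0 -> ~ (2 <= j /\ nth 0 s 0 = osucc n (nth 0 s 1))) ->
  pathEdge n Sig (rot r (Lj n s j)).
Proof.
move=> hn hg hj hr hrj h0; left; split; last first.
  move=> ht; case: (not_tau hn hg hj hr ht) => // [[r0 hh]]; exact: h0 r0 hh.
have hgs := hg; case: hgs => hs _ _ _.
exists (n :: s); split; first by apply: good_seed => //; lia.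
split; first by apply: inPerms_Lj; lia.
have hsC : size (Lj n s j) = n by rewrite Lj_size //; lia.
have huC : uniq (Lj n s j) by apply: Lj_uniq.
have hCx : nth 0 (Lj n s j) j.+1 = osucc n (nth 0 s 0) by rewrite Lj_nth ?ltnn ?eqxx //; lia.
rewrite /mis /=.
case: (ltnP r.+1 n) => hrn.
  have e1 : nth 0 (rot r (Lj n s j)) 1 = nth 0 (Lj n s j) r.+1.
    by rewrite nth_rot ?addn1 // hsC; lia.
  rewrite e1 -hCx => /eqP; rewrite (nth_uniq 0 _ _ huC); try (rewrite hsC; lia).
  by move/eqP; lia.
rewrite nth_rot_last; try lia.
move=> e; have := osucc_range (n := n) (nth 0 s 0) ltac:(lia); rewrite -e /=; lia.
Qed.

Lemma tau_in n s j : 5 <= n -> good n s -> j <= n - 2 -> inP_tau n (rot j (Lj n s j)).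
Proof.
move=> hn hg hj; have hgs := hg; case: hgs => hs _ _ _.
exists (n :: s); split; first by apply: good_seed => //; lia.
split; first by apply: inPerms_Lj; lia.
have hsC : size (Lj n s j) = n by rewrite Lj_size //; lia.
rewrite nth_rot; last by lia.
by rewrite addn1 Lj_nth ?ltnn ?eqxx //; lia.
Qed.

Lemma height_okP n s k : height_ok n (n :: s) k <->
  (forall q, q.+2 <= k -> nth 0 s q = osucc n (nth 0 s q.+1)).
Proof.
rewrite /height_ok; split.
  move/allP=> h q hq.
  have := h q.+2; rewrite mem_iota => /(_ ltac:(lia)) /eqP.
  by rewrite subn1.
move=> h; apply/allP => i; rewrite mem_iota => hi.
have -> : i = (i - 2).+2 by lia.
by rewrite subn1 /=; apply/eqP; apply: h; lia.
Qed.

Lemma height_facts n s k : 1 <= k -> k.+1 <= n - 2 -> height n (n :: s) = k ->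
  (forall q, q.+2 <= k -> nth 0 s q = osucc n (nth 0 s q.+1)) /\
  nth 0 s (k - 1) <> osucc n (nth 0 s k).
Proof.
move=> hk hkn hh.
have ha : height_ok n (n :: s) k.
  case hb: (height_ok n (n :: s) k) => //.
  have : height n (n :: s) <= k - 1.
    rewrite /height; apply: (big_ind (fun v => v <= k - 1)) => //.
      by move=> x y h1 h2; rewrite geq_max h1 h2.
    move=> i /height_okP hi; case: (leqP i (k - 1)) => // hik.
    suff : height_ok n (n :: s) k by rewrite hb.
    by apply/height_okP => q hq; apply: hi; lia.
  by rewrite hh; lia.
move/height_okP: ha => ha; split => // hc.
have : k.+1 <= height n (n :: s).
  rewrite /height; apply: (@leq_bigmax_seq _ _ _ (fun i => i)).
    by rewrite mem_index_iota; lia.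
  apply/height_okP => q hq.
  case: (ltnP q.+2 k.+1) => hq2; first by apply: ha; lia.
  have -> : q = k - 1 by lia.
  by have -> : (k - 1).+1 = k by lia.
move=> h; lia.
Qed.

Lemma height_eq n s d : 1 <= d -> d.+1 <= n - 2 ->
  (forall q, q.+2 <= d -> nth 0 s q = osucc n (nth 0 s q.+1)) ->
  nth 0 s (d - 1) <> osucc n (nth 0 s d) -> height n (n :: s) = d.
Proof.
move=> hd hdn ha hc; apply/eqP; rewrite eqn_leq; apply/andP; split.
  rewrite /height; apply: (big_ind (fun v => v <= d)) => //.
    by move=> x y h1 h2; rewrite geq_max h1 h2.
  move=> i /height_okP hi; case: (leqP i d) => // hid.
  exfalso; apply: hc.
  have := hi (d - 1) ltac:(lia).
  by have -> : (d - 1).+1 = d by lia.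
rewrite /height; apply: (@leq_bigmax_seq _ _ _ (fun i => i)).
  by rewrite mem_index_iota; lia.
by apply/height_okP.
Qed.

Lemma Delta_le n k i : Delta n k i <= k - 1.
Proof. by rewrite /Delta geq_minl. Qed.

Lemma Wf_S n f k : Wf n f.+1 k.+1 =
  Tau :: flatten [seq nseq i Sig ++ Wf n f (Delta n k.+1 i) ++ gamma (n - 2 - i) | i <- iota 1 (n - 2)].
Proof. by []. Qed.

Lemma Wf_succ n f k : k <= f -> Wf n f.+1 k = Wf n f k.
Proof.
elim: f k => [|f IH] [|k] hk //.
rewrite Wf_S [in RHS]Wf_S.
congr (_ :: flatten _); apply: eq_map => i.
rewrite IH //; have := Delta_le n k.+1 i; lia.
Qed.

Lemma Wf_W n f k : k <= f -> Wf n f k = W n k.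
Proof.
move=> h; rewrite /W; move: (f - k) (subnK h) => d <-.
elim: d => [|d IH]; first by rewrite add0n.
by rewrite addSn Wf_succ ?IH //; lia.
Qed.

Lemma W_unfold n k : 1 <= k -> W n k =
  Tau :: flatten [seq nseq i Sig ++ W n (Delta n k i) ++ gamma (n - 2 - i) | i <- iota 1 (n - 2)].
Proof.
case: k => [//|k] _; rewrite {1}/W Wf_S.
congr (_ :: flatten _); apply: eq_map => i.
rewrite Wf_W //; have := Delta_le n k.+1 i; lia.
Qed.

Lemma tau_Lj n s j : 1 <= j <= size s -> tau (rot j (Lj n s j)) = rot j (Lj n s j.-1).
Proof.
move=> hj.
set x := osucc n (nth 0 s 0).
have hj' : j = (j.-1).+1 by lia.
have e1 : take j s = rcons (take j.-1 s) (nth 0 s j.-1) by rewrite {1}hj' (take_nth 0) //; lia.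
have e2 : drop j.-1 s = nth 0 s j.-1 :: drop j s by rewrite (drop_nth 0) -?hj' //; lia.
have hsz : size (n :: take j.-1 s) = j by rewrite /= size_take; case: ifP; lia.
have -> : Lj n s j = (n :: take j.-1 s) ++ nth 0 s j.-1 :: x :: drop j s.
  by rewrite /Lj e1 -cats1 /= -catA.
have -> : Lj n s j.-1 = (n :: take j.-1 s) ++ x :: nth 0 s j.-1 :: drop j s.
  by rewrite /Lj e2.
have hr : forall l, rot j ((n :: take j.-1 s) ++ l) = l ++ (n :: take j.-1 s).
  by move=> l; rewrite -{1}hsz rot_size_cat.
by rewrite !hr.
Qed.

Lemma tau_L0 n s : tau (Lj n s 0) = rot (size s).+1 (Lj n s (size s)).
Proof.
rewrite /Lj take0 drop0 take_size drop_size /=.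
have := rot_size_cat (n :: s) [:: osucc n (nth 0 s 0)]; rewrite /= => ->.
by [].
Qed.

Lemma size_pi0 n : size (pi0 n) = n.
Proof. by rewrite /pi0 size_rev size_iota. Qed.

Lemma nth_pi0 n i : i < n -> nth 0 (pi0 n) i = n - i.
Proof.
move=> h; rewrite /pi0 nth_rev size_iota // nth_iota; lia.
Qed.

Lemma nth_tau_ge2 (p : seq nat) q : 2 <= q -> nth 0 (tau p) q = nth 0 p q.
Proof. by case: p => [|a [|b t]] //; case: q => [|[|q]]. Qed.

Lemma nth_tau0 (p : seq nat) : 2 <= size p -> nth 0 (tau p) 0 = nth 0 p 1.
Proof. by case: p => [|a [|b t]]. Qed.

Lemma nth_tau1 (p : seq nat) : 2 <= size p -> nth 0 (tau p) 1 = nth 0 p 0.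
Proof. by case: p => [|a [|b t]]. Qed.

Lemma nth_tsp n q : 5 <= n -> q < n - 1 ->
  nth 0 (tau (sigma (pi0 n))) q = if q == 0 then n - 2 else if q == 1 then n - 1 else n - q - 1.
Proof.
move=> hn hq.
have hs : size (sigma (pi0 n)) = n by rewrite /sigma size_rot size_pi0.
case: q hq => [|[|q]] hq /=.
- rewrite nth_tau0 ?hs; last lia.
  rewrite /sigma nth_rot ?size_pi0; last lia.
  rewrite nth_pi0 //; lia.
- rewrite nth_tau1 ?hs; last lia.
  rewrite /sigma nth_rot ?size_pi0; last lia.
  rewrite nth_pi0 //; lia.
- rewrite nth_tau_ge2 //.
  rewrite /sigma nth_rot ?size_pi0; last lia.
  rewrite nth_pi0 //; lia.
Qed.

Lemma nth_rot_wrap (A : seq nat) r : 0 < r < size A -> nth 0 (rot r A) (size A - r) = nth 0 A 0.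
Proof.
move=> h; rewrite /rot nth_cat size_drop ltnn subnn nth_take //; lia.
Qed.

Lemma desc_chain n s : 5 <= n -> (forall t, t < n - 2 -> nth 0 s t = n - 2 - t) ->
  forall q, q.+1 < n - 2 -> nth 0 s q = osucc n (nth 0 s q.+1).
Proof.
move=> hn h q hq; rewrite !h; try lia.
rewrite /osucc; case: (ltnP (n - 2 - q.+1) (n - 1)) => h2; lia.
Qed.

Lemma tau_edge n s j k : 5 <= n -> good n s -> 1 <= k <= n - 4 -> height n (n :: s) = k ->
  j <= n - 2 -> pathEdge n Tau (rot j (Lj n s j)).
Proof.
move=> hn hg hk hh hj.
have hgs := hg; case: hgs => hs _ _ _.
have [_ hc] := height_facts (n := n) (s := s) (k := k) ltac:(lia) ltac:(lia) hh.
have hdesc : ~ (forall t, t < n - 2 -> nth 0 s t = n - 2 - t).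
  move=> hd; apply: hc.
  have := desc_chain hn hd (q := k - 1) ltac:(lia).
  by have -> : (k - 1).+1 = k by lia.
have hsC : size (Lj n s j) = n by rewrite Lj_size //; lia.
split; first exact: tau_in.
split.
  case: j hj hsC => [|j] hj hsC e.
    rewrite rot0 in e.
    apply: hdesc => t ht.
    have e2 : nth 0 (Lj n s 0) t.+2 = nth 0 (pi0 n) t.+2 by rewrite e.
    rewrite nth_pi0 in e2; last lia.
    rewrite Lj_nth in e2; last lia.
    move: e2 => /= ->; lia.
  have e2 : nth 0 (rot j.+1 (Lj n s j.+1)) 0 = nth 0 (pi0 n) 0 by rewrite e.
  rewrite nth_pi0 in e2; last lia.
  rewrite nth_rot ?hsC in e2; last lia.
  rewrite addn0 Lj_nth in e2; last lia.
  rewrite ifT in e2; last lia.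
  have := good_range hg (q := j) ltac:(lia); lia.
case: j hj hsC => [|[|j]] hj hsC e.
- have e2 : nth 0 (rot 0 (Lj n s 0)) 0 = nth 0 (tau (sigma (pi0 n))) 0 by rewrite e.
  rewrite nth_tsp // in e2; last lia.
  by rewrite rot0 /= in e2; lia.
- apply: hdesc => t ht.
  case: t ht => [|t] ht.
    have e2 : nth 0 (rot 1 (Lj n s 1)) 0 = nth 0 (tau (sigma (pi0 n))) 0 by rewrite e.
    rewrite nth_tsp // in e2; last lia.
    rewrite nth_rot ?hsC in e2; last lia.
    by rewrite Lj_nth /= in e2; lia.
  have e2 : nth 0 (rot 1 (Lj n s 1)) t.+2 = nth 0 (tau (sigma (pi0 n))) t.+2 by rewrite e.
  rewrite nth_tsp // in e2; last lia.
  rewrite nth_rot ?hsC in e2; last lia.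
  rewrite add1n Lj_nth /= in e2; last lia.
  rewrite e2; lia.
- have e2 : nth 0 (rot j.+2 (Lj n s j.+2)) (size (Lj n s j.+2) - j.+2) =
            nth 0 (tau (sigma (pi0 n))) (size (Lj n s j.+2) - j.+2) by rewrite e.
  rewrite nth_rot_wrap in e2; last lia.
  rewrite hsC nth_tsp // in e2; last lia.
  move: e2; rewrite /Lj /= ifF; last lia.
  rewrite ifF; last lia.
  lia.
Qed.

Lemma osucc_mod n a : 3 <= n -> a <= n - 1 -> osucc n a %% (n - 1) = a.+1 %% (n - 1).
Proof.
move=> hn ha; rewrite /osucc; case: (ltnP a (n - 1)) => h; first by rewrite addn1.
have -> : a.+1 = (n - 1) + 1 by lia.
by rewrite modnDl.
Qed.

Lemma chain_mod n (s : seq nat) m : 3 <= n ->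
  (forall q, q < m -> nth 0 s q = osucc n (nth 0 s q.+1)) ->
  (forall q, q <= m -> nth 0 s q <= n - 1) ->
  nth 0 s 0 %% (n - 1) = (nth 0 s m + m) %% (n - 1).
Proof.
move=> hn; elim: m => [|m IH] hc hr; first by rewrite addn0.
rewrite IH; [|by move=> q hq; apply: hc; lia|by move=> q hq; apply: hr; lia].
rewrite -modnDml hc // osucc_mod //; last by apply: hr.
by rewrite modnDml addSnnS addnS.
Qed.

Lemma nth_cons_pred (a : nat) t q : 0 < q -> nth 0 (a :: t) q = nth 0 t (q - 1).
Proof. by case: q => //= q _; rewrite subn1. Qed.

Lemma phi_height n a t j k : 5 <= n -> good n (a :: t) -> height n [:: n, a & t] = k ->
  2 <= k <= n - 4 -> 2 <= j <= n - 2 ->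
  height n (n :: (take (j - 1) t ++ osucc n a :: drop (j - 1) t)) = minn (k - 1) (j - 1).
Proof.
move=> hn hg hh hk hj.
have hgs := hg; case: hgs => hs _ _ _.
have hst : size t = n - 3 by simpl in hs; lia.
have [ha hc] := height_facts (n := n) (s := a :: t) (k := k) ltac:(lia) ltac:(lia) hh.
set x := osucc n a.
have hnth : forall q, nth 0 (take (j - 1) t ++ x :: drop (j - 1) t) q =
    if q < j - 1 then nth 0 t q else if q == j - 1 then x else nth 0 t q.-1.
  by move=> q; rewrite nth_ins //; lia.
apply: height_eq; try lia.
  move=> q hq; rewrite !hnth ifT; last lia.
  rewrite ifT; last lia.
  exact: (ha q.+1 ltac:(lia)).
rewrite !hnth.
case: (ltnP k j) => hkj.
  have -> : minn (k - 1) (j - 1) = k - 1 by lia.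
  rewrite ifT; last lia.
  rewrite ifT; last lia.
  have e1 : nth 0 (a :: t) (k - 1) = nth 0 t (k - 1 - 1) by rewrite nth_cons_pred //; lia.
  have e2 : nth 0 (a :: t) k = nth 0 t (k - 1) by rewrite nth_cons_pred //; lia.
  by rewrite -e1 -e2.
have -> : minn (k - 1) (j - 1) = j - 1 by lia.
rewrite ifT; last lia.
rewrite ifF; last lia.
rewrite eqxx => e.
have hcm := chain_mod (n := n) (s := a :: t) (m := j - 1) ltac:(lia)
  ltac:(move=> q hq; apply: ha; lia)
  ltac:(move=> q hq; have := good_range hg (q := q) ltac:(simpl; lia); lia).
have e1 : nth 0 (a :: t) (j - 1) = nth 0 t (j - 1 - 1) by rewrite nth_cons_pred //; lia.
rewrite e1 e /= in hcm.
have hx : x <= n - 1 by have := osucc_range (n := n) a ltac:(lia); lia.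
have har : a <= n - 1 by have := good_range hg (q := 0) ltac:(simpl; lia); simpl; lia.
move: hcm.
have h1 : osucc n x %% (n - 1) = x.+1 %% (n - 1) by apply: osucc_mod; lia.
have h2 : osucc n a %% (n - 1) = a.+1 %% (n - 1) by apply: osucc_mod; lia.
rewrite -(modnDml (osucc n x)) h1 modnDml.
have -> : x.+1 + (j - 1) = x + j by lia.
rewrite -(modnDml x) /x h2 modnDml.
have -> : a.+1 + j = a + (j + 1) by lia.
rewrite -[in X in X = _ -> _](addn0 a) => /eqP; rewrite eq_sym eqn_modDl mod0n => /eqP hd.
have hdv : (n - 1) %| (j + 1) by rewrite /dvdn hd.
have hle := dvdn_leq (ltac:(lia) : 0 < j + 1) hdv.
clear -hle hj hk hkj; lia.

Qed.

Lemma phi_good n a t j : 5 <= n -> good n (a :: t) -> a = osucc n (nth 0 t 0) -> 2 <= j <= n - 2 ->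
  good n (take (j - 1) t ++ osucc n a :: drop (j - 1) t).
Proof.
move=> hn [hs hu ha hx] hc hj.
have hst : size t = n - 3 by simpl in hs; lia.
have hp := perm_ins t (j - 1) (osucc n a).
move: hu hx => /= /andP [hnat /andP [hat hut]]; rewrite !inE !negb_or => /and3P [hxn hxa hxt].
split.
- by rewrite size_cat /= size_take size_drop; case: ifP; lia.
- rewrite /= (perm_uniq hp) (perm_mem hp) /= inE negb_or eq_sym hxn hut hxt /=.
  by move: hnat; rewrite inE negb_or => /andP [_ ->].
- rewrite (perm_all _ hp) /=; move: ha => /= /andP [_ ->].
  by have := osucc_range (n := n) a ltac:(lia); move=> /andP [-> h]; rewrite andbT; lia.
- rewrite nth_ins; last lia.
  rewrite ifT; last lia.
  rewrite -hc /= inE negb_or (perm_mem hp) /= inE negb_or.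
  by rewrite [a == osucc n a]eq_sym hxa hat andbT; move: hnat; rewrite inE negb_or eq_sym => /andP [-> _].
Qed.

Lemma Lj_phi n a t j : a = osucc n (nth 0 t 0) -> 2 <= j -> j - 1 <= size t ->
  Lj n (take (j - 1) t ++ osucc n a :: drop (j - 1) t) 0 = Lj n (a :: t) j.
Proof.
move=> hc hj2 hjt.
rewrite /Lj take0 drop0 /= nth_ins // ifT; last lia.
rewrite -hc.
have -> : j = (j - 1).+1 by lia.
by rewrite /= subn1.
Qed.

Lemma iota_last a m : iota a m.+1 = iota a m ++ [:: a + m].
Proof. by rewrite -addn1 iotaD. Qed.

Lemma main_ind n : 5 <= n -> forall K k s, k <= K -> 1 <= k <= n - 4 -> good n s ->
  height n (n :: s) = k ->
  walk n (Lj n s 0) (W n k) /\ act_word (W n k) (Lj n s 0) = rot 1 (Lj n s 0).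
Proof.
move=> hn; elim => [|K IH] k s hkK hk hg hh; first by lia.
have hgs := hg; case: hgs => hs _ _ _.
have [hca hcb] := height_facts (n := n) (s := s) (k := k) ltac:(lia) ltac:(lia) hh.
have hblock : forall i, 1 <= i <= n - 2 ->
  walk n (rot (n - i) (Lj n s (n - 1 - i)))
    (nseq i Sig ++ W n (Delta n k i) ++ gamma (n - 2 - i)) /\
  act_word (nseq i Sig ++ W n (Delta n k i) ++ gamma (n - 2 - i))
    (rot (n - i) (Lj n s (n - 1 - i))) = rot (n - 1 - i) (Lj n s (n - 2 - i)).
  move=> i hi.
  set j := n - 1 - i.
  have hj : 1 <= j <= n - 2 by rewrite /j; lia.
  have e1 : n - i = j.+1 by rewrite /j; lia.
  have e2 : n - 2 - i = j.-1 by rewrite /j; lia.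
  have e3 : gamma (n - 2 - i) = nseq (j - 1) Sig ++ [:: Tau].
    by rewrite /gamma cats1; congr rcons; congr nseq; rewrite /j; lia.
  have e4 : i = n - j.+1 by rewrite /j; lia.
  rewrite e1 e3 e2.
  set C := Lj n s j.
  have hsC : size C = n by rewrite /C Lj_size //; lia.
  have [w1 a1] : walk n (rot j.+1 C) (nseq i Sig) /\ act_word (nseq i Sig) (rot j.+1 C) = C.
    rewrite e4; have := sig_run (n := n) (A := C) (a := j.+1) (b := n) ltac:(lia) ltac:(lia).
    have hrC : rot n C = C by rewrite -{1}hsC rot_size.
    rewrite hrC; apply => r hr.
    apply: sig_edge => //; lia.
  have [w2 a2] : walk n C (W n (Delta n k i)) /\ act_word (W n (Delta n k i)) C = rot 1 C.
    have hD : Delta n k i = minn (k - 1) (j - 1) by rewrite /Delta /j; congr minn; lia.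
    case: (posnP (Delta n k i)) => hd0.
      rewrite hd0 /W /=; split => //; split => //.
      rewrite -[C]rot0; apply: sig_edge => //; try lia.
      move=> _ [hj2 hc0]; apply: hcb.
      have hk1 : k = 1 by lia.
      by rewrite hk1.
    have [a [t est]] : exists a t, s = a :: t.
      by case: (s) hs => [|a t] /=; [lia | exists a, t].
    rewrite /C est; rewrite est in hg hs hca hh.
    have hc : a = osucc n (nth 0 t 0) by apply: (hca 0); lia.
    have hst : size t = n - 3 by simpl in hs; lia.
    have hph := phi_height hn hg hh ltac:(lia) ltac:(lia) (j := j).
    have hpg := phi_good hn hg hc (j := j) ltac:(lia).
    have := IH (Delta n k i) _ ltac:(have := Delta_le n k i; lia) ltac:(lia) hpg.
    rewrite hD hph => /(_ erefl).
    by rewrite Lj_phi //; lia.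
  have [w3 a3] : walk n (rot 1 C) (nseq (j - 1) Sig) /\ act_word (nseq (j - 1) Sig) (rot 1 C) = rot j C.
    have := sig_run (n := n) (A := C) (a := 1) (b := j) ltac:(lia) ltac:(lia).
    apply => r hr.
    apply: sig_edge => //; lia.
  have w4 : pathEdge n Tau (rot j C) by apply: (tau_edge (k := k)) => //; lia.
  have a4 : tau (rot j C) = rot j (Lj n s j.-1) by rewrite /C tau_Lj //; lia.
  rewrite !walk_cat !act_word_cat a1 a2 a3 /= a4.
  by case: w4 => ? [? ?]; do !split.
have hseq : forall m, m <= n - 2 ->
  walk n (rot (n - 1) (Lj n s (n - 2)))
    (flatten [seq nseq i Sig ++ W n (Delta n k i) ++ gamma (n - 2 - i) | i <- iota 1 m]) /\
  act_word (flatten [seq nseq i Sig ++ W n (Delta n k i) ++ gamma (n - 2 - i) | i <- iota 1 m])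
    (rot (n - 1) (Lj n s (n - 2))) = rot (n - 1 - m) (Lj n s (n - 2 - m)).
  elim => [|m IHm] hm; first by rewrite /= !subn0.
  have [w a] := IHm ltac:(lia).
  rewrite iota_last.
  rewrite map_cat flatten_cat walk_cat act_word_cat a.
  have hf : forall X : seq label, flatten [:: X] = X by move=> X; rewrite /= cats0.
  rewrite [map _ [:: _]]/= hf.
  have [wb ab] := hblock m.+1 ltac:(lia).
  have q1 : n - m.+1 = n - 1 - m by lia.
  rewrite q1 in wb ab.
  have q2 : n - 1 - m.+1 = n - 2 - m by lia.
  rewrite [in Lj n s (n - 1 - m.+1)]q2 in wb ab.
  by split; [split; [exact: w | exact: wb] | exact: ab].
rewrite W_unfold; last lia.
have [w a] := hseq (n - 2) (leqnn _).
have e0 : tau (Lj n s 0) = rot (n - 1) (Lj n s (n - 2)).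
  rewrite tau_L0 hs; congr rot; lia.
have ew : forall l w p, walk n p (l :: w) = (pathEdge n l p /\ walk n (act l p) w) by [].
have ea : forall l w p, act_word (l :: w) p = act_word w (act l p) by [].
rewrite ew ea (_ : act Tau (Lj n s 0) = tau (Lj n s 0)) // e0 a.
split; last by congr rot; [lia | congr Lj; lia].
split => //.
have := tau_edge (j := 0) hn hg hk hh ltac:(lia).
by rewrite rot0.
Qed.

Unset Implicit Arguments.
Theorem mainTheorem5 (n : nat) (hn : 5 <= n) (k : nat) (hk : 1 <= k <= n - 4)
  (psi : seq nat) :
  isSeed n psi -> ~ inHub n psi -> height n psi = k ->
  walk n (psi_tilde n psi) (W n k) /\
  act_word (W n k) (psi_tilde n psi) = psi_rot n psi.
Proof.
move=> hs _ hh.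
have [epsi hg] := seed_good (ltac:(lia) : 2 <= n) hs.
move: hh; rewrite epsi => hh.
have := main_ind hn (leqnn k) hk hg hh.
have -> : psi_tilde n (n :: behead psi) = Lj n (behead psi) 0.
  by rewrite /psi_tilde /Lj take0 drop0.
have -> : psi_rot n (n :: behead psi) = rot 1 (Lj n (behead psi) 0).
  by rewrite /psi_rot /Lj take0 drop0 rot1_cons.
done.
Qed.
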